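(* Let $\varepsilon\in\{-1,1\}$, let $M(\phi,\xi,\eta,g_M)$ be a Lorentzian almost (para)contact manifold of dimension $2m+1$, let $(N,g_N)$ be a semi-Riemannian manifold of dimension $n$, and let $F:M\to N$ be an anti-invariant semi-Riemannian submersion. Then: (a) if $\xi$ is vertical, then $m\le n\le 2m$; (b) if $m=n$, then $\xi$ is vertical; (c) if $\xi$ is horizontal, then $m+1\le n$.
   Context: A Lorentzian almost contact ($\varepsilon=-1$), resp. almost paracontact ($\varepsilon=1$), manifold is a $(2m+1)$-dimensional manifold $M$ with Lorentzian metric $g_M$, $(1,1)$-tensor $\phi$, vector field $\xi$ (characteristic vector field) and $1$-form $\eta$ with $\phi^2X=\varepsilon X+\eta(X)\xi$, $g_M(\phi X,\phi Y)=g_M(X,Y)+\eta(X)\eta(Y)$, $\eta(X)=\varepsilon g_M(X,\xi)$, $\eta(\xi)=-\varepsilon$. A semi-Riemannian submersion $F:M\to N$ is a submersion with nondegenerate fibres such that $F_*$ is an isometry from $(\ker F_* )^\perp$ onto $TN$; it is anti-invariant if $\phi(\ker F_* )\subseteq(\ker F_* )^\perp$. $\xi$ is vertical if it takes values in $\ker F_*$, horizontal if in $(\ker F_* )^\perp$. *)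

(* Defs.v *)
(* pointwise (tangent-space) linear-algebra model. *)
From HB Require Import structures.
From mathcomp Require Import all_boot all_order all_algebra.
Set Implicit Arguments. Unset Strict Implicit. Unset Printing Implicit Defensive.
Import Order.TTheory GRing.Theory Num.Theory.
Local Open Scope ring_scope.

Section Defs.
Variable R : realFieldType.

Definition form N (G : 'M[R]_N) (x y : 'rV[R]_N) : R := (x *m G *m y^T) 0 0.

Definition sym_nondeg N (G : 'M[R]_N) : Prop := G^T = G /\ G \in unitmx.

Definition neg_def_on N (G : 'M[R]_N) k (U : 'M[R]_(k, N)) : Prop :=
  forall x : 'rV[R]_k, x != 0 -> form G (x *m U) (x *m U) < 0.

Definition lorentzian N (G : 'M[R]_N) : Prop :=
  sym_nondeg G /\ (exists U : 'M[R]_(1, N), neg_def_on G U) /\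
  (forall k (U : 'M[R]_(k, N)), neg_def_on G U -> (k <= 1)%N).

Definition lform N (etav : 'cV[R]_N) (X : 'rV[R]_N) : R := (X *m etav) 0 0.

(* Lorentzian almost contact (eps = -1) / paracontact (eps = 1) structure
   (phi acting as X |-> X *m Phi) on the tangent space 'rV_N *)
Definition lorentz_almost_paracontact N (eps : R) (G : 'M[R]_N)
    (Phi : 'M[R]_N) (xi : 'rV[R]_N) (etav : 'cV[R]_N) : Prop :=
  [/\ lorentzian G,
      (forall X, X *m Phi *m Phi = eps *: X + lform etav X *: xi),
      (forall X Y, form G (X *m Phi) (Y *m Phi)
                  = form G X Y + lform etav X * lform etav Y),
      (forall X, lform etav X = eps * form G X xi)
    & lform etav xi = - eps].

Definition vertical N n (Fs : 'M[R]_(N, n)) (v : 'rV[R]_N) : Prop := v *m Fs = 0.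
Definition horizontal N n (G : 'M[R]_N) (Fs : 'M[R]_(N, n)) (v : 'rV[R]_N) : Prop :=
  forall w, vertical Fs w -> form G v w = 0.

(* differential Fs : T_pM -> T_qN of a semi-Riemannian submersion at a point *)
Definition semiRiem_submersion N n (G : 'M[R]_N) (GN : 'M[R]_n)
    (Fs : 'M[R]_(N, n)) : Prop :=
  [/\ sym_nondeg GN,
      row_full Fs,
      (forall v, vertical Fs v ->
        (forall w, vertical Fs w -> form G v w = 0) -> v = 0),
      (forall X Y, horizontal G Fs X -> horizontal G Fs Y ->
        form GN (X *m Fs) (Y *m Fs) = form G X Y)
    &
      forall y : 'rV[R]_n, exists2 X, horizontal G Fs X & X *m Fs = y].

Definition anti_invariant N n (G : 'M[R]_N) (Phi : 'M[R]_N) (Fs : 'M[R]_(N, n)) : Prop :=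
  forall v, vertical Fs v -> horizontal G Fs (v *m Phi).

End Defs.

(* Main.v *)
Require Import Defs.
From HB Require Import structures.
From mathcomp Require Import all_boot all_order all_algebra.
From mathcomp Require Import zify.
Import Order.TTheory GRing.Theory Num.Theory.
Local Open Scope ring_scope.

Lemma lformZ (R : realFieldType) N (etav : 'cV[R]_N) (c : R) X :
  lform etav (c *: X) = c * lform etav X.
Proof. by rewrite /lform -scalemxAl mxE. Qed.

Lemma lform0 (R : realFieldType) N (etav : 'cV[R]_N) :
  lform etav 0 = 0.
Proof. by rewrite /lform mul0mx mxE. Qed.

Lemma sub_line (R : realFieldType) k N (A : 'M[R]_(k, N)) (x : 'rV[R]_N) :
  (A <= x)%MS -> A = 0 \/ (x <= A)%MS.
Proof.
move=> Ax.
have r1 : (\rank A <= 1)%N by apply: leq_trans (mxrankS Ax) (rank_leq_row _).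
case: (eqVneq (\rank A) 0%N) => [/eqP|nz].
  by rewrite mxrank_eq0 => /eqP ->; left.
right; have := mxrank_leqif_sup Ax => -[_ <-].
apply/eqP; have := rank_leq_row x; have := mxrankS Ax; lia.
Qed.


Lemma struct_facts (R : realFieldType) N (eps : R) (G Phi : 'M[R]_N)
    (xi : 'rV[R]_N) (etav : 'cV[R]_N) :
  (eps = 1 \/ eps = -1) ->
  lorentz_almost_paracontact eps G Phi xi etav ->
  [/\ xi != 0, xi *m Phi = 0,
      (forall X, lform etav (X *m Phi) = 0)
    & (forall X, X *m Phi = 0 -> X = (- (eps * lform etav X)) *: xi)].
Proof.
move=> heps [_ H2 _ _ H5].
have ee : eps * eps = 1 by case: heps => ->; rewrite ?mulN1r ?opprK ?mulr1.
have en0 : eps != 0 by case: heps => ->; rewrite ?oppr_eq0 oner_eq0.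
have xin0 : xi != 0.
  by apply/eqP => x0; move: H5; rewrite x0 lform0 => /eqP; rewrite eq_sym oppr_eq0 (negPf en0).
have E : forall X, lform etav X *: (xi *m Phi) = lform etav (X *m Phi) *: xi.
  move=> X; have h2 : X *m Phi *m Phi *m Phi = (eps *: X + lform etav X *: xi) *m Phi.
    by rewrite [X *m Phi *m Phi]H2.
  move: h2; rewrite H2 mulmxDl -!scalemxAl => /addrI; done.
set c := lform etav (xi *m Phi).
have xP : xi *m Phi = (- eps * c) *: xi.
  have := E xi; rewrite H5 => h.
  by rewrite -scalerA -h scalerA mulrN mulNr opprK ee scale1r.
have xP0 : xi *m Phi = 0.
  have := H2 xi; rewrite H5 scaleNr addrN xP -scalemxAl xP scalerA.
  move/eqP; rewrite scaler_eq0 (negPf xin0) orbF => /eqP h.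
  by move: h => /eqP; rewrite mulf_eq0 orbb => /eqP ->; rewrite scale0r.
have L2 : forall X, lform etav (X *m Phi) = 0.
  move=> X; have := E X; rewrite xP0 scaler0 => /esym/eqP.
  by rewrite scaler_eq0 (negPf xin0) orbF => /eqP.
split=> // X X0.
have := H2 X; rewrite X0 mul0mx => /eqP; rewrite eq_sym addr_eq0 => /eqP h.
transitivity (eps *: (eps *: X)); first by rewrite scalerA ee scale1r.
by rewrite h scalerN scalerA -scaleNr.
Qed.

Arguments struct_facts {R N eps G Phi xi etav}.
Arguments sub_line {R k N A x}.

Theorem mainTheorem3 (R : realFieldType) (eps : R) (m n : nat)
    (G : 'M[R]_(2 * m + 1)) (Phi : 'M[R]_(2 * m + 1))
    (xi : 'rV[R]_(2 * m + 1)) (etav : 'cV[R]_(2 * m + 1))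
    (GN : 'M[R]_n) (Fs : 'M[R]_(2 * m + 1, n)) :
  (eps = 1 \/ eps = -1) ->
  lorentz_almost_paracontact eps G Phi xi etav ->
  semiRiem_submersion G GN Fs ->
  anti_invariant G Phi Fs ->
  [/\ (vertical Fs xi -> (m <= n)%N /\ (n <= 2 * m)%N),
      (m = n -> vertical Fs xi)
    & (horizontal G Fs xi -> (m + 1 <= n)%N)].
Proof.
move=> heps HL [HGN Hfull Hnd Hiso Honto] Hanti.
have [xin0 xP0 L2 L3] := struct_facts heps HL.
have en0 : eps != 0 by case: heps => ->; rewrite ?oppr_eq0 oner_eq0.
have [[[_ Gu] _] _ _ H4 H5] := HL.
set K := kermx Fs.
have vK : forall v : 'rV_(2 * m + 1), (v <= K)%MS = (v *m Fs == 0).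
  by move=> v; rewrite sub_kermx.
have rowK : forall j, vertical Fs (row j K).
  by move=> j; rewrite /vertical -row_mul mulmx_ker row0.
set Hm := kermx (G *m K^T).
have hH : forall v, horizontal G Fs v -> (v <= Hm)%MS.
  move=> v hv; rewrite sub_kermx; apply/eqP/rowP => j.
  have := hv (row j K) (rowK j).
  move=> h; rewrite [RHS]mxE -h /Defs.form mulmxA [LHS]mxE [RHS]mxE.
  by apply: eq_bigr => k _; rewrite !mxE.
have rK : \rank K = (2 * m + 1 - n)%N.
  by rewrite mxrank_ker (eqP Hfull).
have rH : (\rank Hm <= n)%N.
  rewrite mxrank_ker.
  have : (\rank K^T <= \rank (G *m K^T))%N.
    by rewrite -{1}(mulKmx Gu K^T) mxrankM_maxr.
  rewrite mxrank_tr rK; lia.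
have KPH : (K *m Phi <= Hm)%MS.
  by apply/row_subP => i; rewrite row_mul; apply/hH/Hanti/rowK.
have kerxi : (kermx Phi <= xi)%MS.
  apply/row_subP => i; rewrite (L3 (row i (kermx Phi))) ?scalemx_sub //.
  by rewrite -row_mul mulmx_ker row0.
have rkle : (\rank K <= \rank (K *m Phi) + 1)%N.
  have := mxrank_mul_ker K Phi.
  have := mxrankS (submx_trans (capmxSr K (kermx Phi)) kerxi).
  have := rank_leq_row xi; lia.
have rkeq : ~~ (xi <= K)%MS -> \rank (K *m Phi) = \rank K.
  move=> nx; have := mxrank_mul_ker K Phi.
  case: (sub_line (submx_trans (capmxSr K (kermx Phi)) kerxi)) => [-> | hx].
    by rewrite mxrank0 addn0.
  by rewrite (submx_trans hx (capmxSl _ _)) in nx.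
have rxi : \rank xi = 1%N.
  have := rank_leq_row xi; have : \rank xi != 0%N by rewrite mxrank_eq0.
  lia.
have rKPH := mxrankS KPH.
split.
- move=> vx; have xK : (xi <= K)%MS by rewrite vK; apply/eqP.
  have := mxrankS xK; lia.
- move=> mn; apply/eqP; rewrite -vK; apply/negPn/negP => nx.
  have := rkeq nx; lia.
- move=> hx.
  have nx : ~~ (xi <= K)%MS.
    apply/negP; rewrite vK => /eqP vx; have := hx xi vx => h0.
    by move: H5; rewrite H4 h0 mulr0 => /eqP; rewrite eq_sym oppr_eq0 (negPf en0).
  have cap : ((K *m Phi) :&: xi)%MS = 0.
    case: (sub_line (capmxSr (K *m Phi) xi)) => // h.
    have /submxP [D hD] := submx_trans h (capmxSl _ _).
    have := L2 (D *m K); rewrite -mulmxA -hD H5 => /eqP.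
    by rewrite oppr_eq0 (negPf en0).
  have := mxrank_disjoint_sum cap.
  have hs : ((K *m Phi) + xi <= Hm)%MS by rewrite addsmx_sub KPH hH.
  have := mxrankS hs; have := rkeq nx; lia.
Qed.
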